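(* For $l,m,n,u,v\in\mathbb{N}$, \[ \sum_{k=-\infty}^\infty (-1)^k\binom{l+m}{l+k}\binom{m+n}{m+k}\binom{n+l}{n+k}\binom{u+v}{u+k}\binom{u+v}{v+k} =\binom{u+v}{u}\sum_{k=0}^{\infty} \frac{(l+m+n-k)!\,(u+v+k)!}{k!\,(l-k)!\,(m-k)!\,(n-k)!\,(u+k)!\,(v+k)!}. \]
   Context: Convention: $1/j!=0$ for negative integers $j$, and binomial coefficients $\binom{a}{b}$ with $b<0$ or $b>a$ are $0$. *)

(* Defs.v *)
From mathcomp Require Import all_boot all_order all_algebra.
Set Implicit Arguments. Unset Strict Implicit. Unset Printing Implicit Defensive.
Import Order.TTheory GRing.Theory Num.Theory.
Local Open Scope ring_scope.

(* Binomial coefficient with integer lower index: C(a,b) = 0 for b < 0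
   (and 'C(a,b) = 0 for b > a already holds in mathcomp). *)
Definition zbinom (a : nat) (b : int) : nat :=
  match b with Posz n => 'C(a, n) | Negz _ => 0%N end.

Definition zinvfact (j : int) : rat :=
  match j with Posz n => (n`!%:R)^-1 | Negz _ => 0 end.

(* Main.v *)
Require Import Defs.
From mathcomp Require Import all_boot all_order all_algebra.
From mathcomp Require Import ring lra zify.
Import Order.TTheory GRing.Theory Num.Theory.
Local Open Scope ring_scope.

Notation q := zinvfact.

Lemma qN (x : int) : x < 0 -> q x = 0.
Proof. by case: x. Qed.

Lemma qP (n : nat) : q n%:Z = (n`!%:R)^-1.
Proof. by []. Qed.

Lemma fact_neq0 (n : nat) : (n`!%:R : rat) != 0.
Proof. by rewrite pnatr_eq0 -lt0n fact_gt0. Qed.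

Lemma q_neq0 (n : nat) : q n%:Z != 0.
Proof. by rewrite qP invr_eq0 fact_neq0. Qed.

Lemma q0 : q 0 = 1.
Proof. by rewrite qP fact0 invr1. Qed.

Lemma fq (n : nat) : (n`!%:R : rat) = (q n%:Z)^-1.
Proof. by rewrite qP invrK. Qed.

Lemma qS (x : int) : q (x - 1) = x%:~R * q x.
Proof.
case: x => [[|n]|n].
- by rewrite qN // mul0r.
- have -> : (Posz n.+1 - 1) = Posz n by lia.
  rewrite !qP factS natrM invfM mulrA.
  have -> : (Posz n.+1)%:~R = n.+1%:R :> rat by [].
  rewrite mulfV ?mul1r //.
  by rewrite pnatr_eq0.
- by rewrite !qN ?mulr0 //; lia.
Qed.

Lemma qS' (x : int) : q x = (x + 1)%:~R * q (x + 1).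
Proof. by rewrite -qS addrK. Qed.

Definition s (k : int) : rat := (-1) ^ k.

Lemma sS (k : int) : s (k + 1) = - s k.
Proof. by rewrite /s exprzDr ?unitrN1 // expr1z mulrN1. Qed.

Definition T (a b c : nat) (k : int) (j : nat) : rat :=
  (a + b + c - j)`!%:R * q (a%:Z - j%:Z) * q (b%:Z - j%:Z) * q (c%:Z - j%:Z)
  * q (j%:Z + k) * q (j%:Z - k).

Definition G (a b c : nat) (k : int) (j : nat) : rat :=
  - ((a + b + c.+1 - j)`!%:R * q (a%:Z - j%:Z) * q (b%:Z - j%:Z)
     * q (c.+1%:Z - j%:Z) * q (j%:Z - 1 + k) * q (j%:Z - 1 - k)).

Lemma step_term (a b c : nat) (k : int) (j : nat) : (j <= a)%N ->
  ((c.+1%:Z + k) * (c.+1%:Z - k))%:~R * T a b c.+1 k j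
  - ((b + c.+1) * (a + c.+1))%:R * T a b c k j
  = G a b c k j.+1 - G a b c k j.
Proof.
move=> hj; rewrite /T /G.
set M := (a + b + c - j)%N.
have e1 : (a + b + c.+1 - j = M.+1)%N by rewrite /M; lia.
have e2 : (a + b + c.+1 - j.+1 = M)%N by rewrite /M; lia.
have hM : M%:R = a%:R + b%:R + c%:R - j%:R :> rat.
  rewrite /M natrB; last by lia.
  by rewrite !natrD.
rewrite e1 e2 factS natrM.
have -> : a%:Z - j.+1%:Z = (a%:Z - j%:Z) - 1 by lia.
have -> : b%:Z - j.+1%:Z = (b%:Z - j%:Z) - 1 by lia.
have -> : c.+1%:Z - j.+1%:Z = (c.+1%:Z - j%:Z) - 1 by lia.
have -> : c%:Z - j%:Z = (c.+1%:Z - j%:Z) - 1 by lia.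
have -> : j.+1%:Z - 1 + k = j%:Z + k by lia.
have -> : j.+1%:Z - 1 - k = j%:Z - k by lia.
have -> : j%:Z - 1 + k = (j%:Z + k) - 1 by lia.
have -> : j%:Z - 1 - k = (j%:Z - k) - 1 by lia.
rewrite !qS.
set X := M`!%:R.
have -> : M.+1%:R = M%:R + 1 :> rat by rewrite -addn1 natrD.
rewrite hM.
ring.
Qed.

Lemma step_sum (a b c : nat) (k : int) :
  ((c.+1%:Z + k) * (c.+1%:Z - k))%:~R * \sum_(0 <= j < a.+1) T a b c.+1 k j
  = ((b + c.+1) * (a + c.+1))%:R * \sum_(0 <= j < a.+1) T a b c k j.
Proof.
apply/eqP; rewrite -subr_eq0 !mulr_sumr -sumrB.
rewrite (telescope_sumr_eq (G a b c k)) //; last first.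
  by move=> j /andP[_ hj]; apply: step_term.
rewrite /G.
rewrite [q (a%:Z - a.+1%:Z)]qN; last by lia.
case: (ltP k 0) => hk.
  by rewrite [q (0%:Z - 1 + k)]qN; [rewrite !mulr0 !mul0r oppr0 subrr|lia].
by rewrite [q (0%:Z - 1 - k)]qN; [rewrite !mulr0 !mul0r oppr0 subrr|lia].
Qed.

Definition P (a b c : nat) (k : int) : rat :=
  q (a%:Z + k) * q (a%:Z - k) * q (b%:Z + k) * q (b%:Z - k)
  * q (c%:Z + k) * q (c%:Z - k).

Lemma sum_single (n i : nat) (f : nat -> rat) :
  (forall j, j != i -> f j = 0) ->
  \sum_(0 <= j < n) f j = if (i < n)%N then f i else 0.
Proof.
move=> hf; elim: n => [|n IH]; first by rewrite big_nil.
rewrite big_nat_recr //= IH.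
case: (ltngtP i n) => h.
- rewrite (hf n) ?addr0; last by apply/eqP; lia.
  by have -> : (i < n.+1)%N by lia.
- rewrite (hf n) ?addr0; last by apply/eqP; lia.
  by have -> : (i < n.+1)%N = false by lia.
- by subst i; rewrite ?ltnn add0r ?ltnSn.
Qed.

Lemma P_sym a b c k : P a b c (- k) = P a b c k.
Proof. rewrite /P !opprK; ring. Qed.

Lemma T_sym a b c k j : T a b c (- k) j = T a b c k j.
Proof. rewrite /T !opprK; ring. Qed.

Lemma deg_case (a b c : nat) :
  ((a + b)`! * (b + c.+1)`! * (c.+1 + a)`!)%:R * P a b c.+1 c.+1%:Z
  = \sum_(0 <= j < a.+1) T a b c.+1 c.+1%:Z j.
Proof.
rewrite (sum_single _ c.+1); last first.
  move=> j hj; rewrite /T.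
  case: (ltnP j c.+1) => h.
    by rewrite [q (j%:Z - _)]qN ?mulr0 //; lia.
  by rewrite [q (c.+1%:Z - j%:Z)]qN ?mulr0 ?mul0r //; lia.
case: ltnP => h.
  rewrite /P /T.
  have -> : (a + b + c.+1 - c.+1 = a + b)%N by lia.
  have -> : a%:Z + c.+1%:Z = (a + c.+1)%N%:Z by [].
  have -> : b%:Z + c.+1%:Z = (b + c.+1)%N%:Z by [].
  have -> : c.+1%:Z + c.+1%:Z = (c.+1 + c.+1)%N%:Z by [].
  have -> : c.+1%:Z - c.+1%:Z = 0%N%:Z by rewrite subrr.
  rewrite (addnC c.+1 a).
  move: (a + c.+1)%N (b + c.+1)%N (c.+1 + c.+1)%N (a + b)%N => x y z w.
  rewrite !natrM !fq q0.
  by field; rewrite !q_neq0.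
rewrite /P (qN (a%:Z - c.+1%:Z)); last by lia.
by rewrite !(mulr0, mul0r).
Qed.

Lemma Aid (a b c : nat) (k : int) :
  ((a + b)`! * (b + c)`! * (c + a)`!)%:R * P a b c k
  = \sum_(0 <= j < a.+1) T a b c k j.
Proof.
elim: c => [|c IH].
  rewrite big_nat_recl // big1_seq ?addr0; last first.
    move=> j _; rewrite /T [q (0%N%:Z - j.+1%:Z)]qN ?mulr0 ?mul0r //; lia.
  rewrite /P /T.
  have [->|hk] := eqVneq k 0.
    rewrite ?addr0 ?subr0 ?oppr0 ?addn0 ?add0n ?subn0 !natrM !fq ?q0.
    by field; rewrite !q_neq0.
  case: (ltP k 0) => h.
    by rewrite (qN (0%N%:Z + k)) ?(mulr0, mul0r) //; lia.
  by rewrite (qN (0%N%:Z - k)) ?(mulr0, mul0r) //; lia.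
have [hd|hd] := eqVneq ((c.+1%:Z + k) * (c.+1%:Z - k)) 0.
  have : (k = c.+1%:Z) \/ (k = - c.+1%:Z).
    by move: hd => /eqP; rewrite mulf_eq0 => /orP[] /eqP h; [right|left]; lia.
  case=> ->; first exact: deg_case.
  rewrite P_sym; under eq_bigr do rewrite T_sym.
  exact: deg_case.
have hd' : ((c.+1%:Z + k) * (c.+1%:Z - k))%:~R != 0 :> rat.
  by rewrite intr_eq0.
apply: (mulfI hd'); rewrite step_sum -IH.
rewrite /P.
have -> : c%:Z + k = (c.+1%:Z + k) - 1 by lia.
have -> : c%:Z - k = (c.+1%:Z - k) - 1 by lia.
rewrite !qS.
rewrite addnS factS addSn factS !natrM.
ring.
Qed.

Lemma E_sum (j W : nat) : (j <= W)%N ->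
  \sum_(0 <= i < (2 * W).+1)
     s (i%:Z - W%:Z) * (q (j%:Z + (i%:Z - W%:Z)) * q (j%:Z - (i%:Z - W%:Z)))
  = (j == 0%N)%:R.
Proof.
case: j => [|j] hj.
  rewrite (sum_single _ W); last first.
    move=> i hi.
    case: (ltnP i W) => h.
      by rewrite (qN (0%N%:Z + (i%:Z - W%:Z))) ?(mulr0, mul0r) //; lia.
    have h' : (W < i)%N by rewrite ltn_neqAle eq_sym hi h.
    by rewrite (qN (0%N%:Z - (i%:Z - W%:Z))) ?(mulr0, mul0r) //; lia.
  have -> : (W < (2 * W).+1)%N by lia.
  rewrite subrr; by vm_compute.
set h := fun i : nat => s (i%:Z - W%:Z) * q (j.+1%:Z + (i%:Z - W%:Z) - 1)
                        * q (j.+1%:Z - (i%:Z - W%:Z)).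
have H : \sum_(0 <= i < (2 * W).+1)
     ((j.+1 + j.+1)%:R * (s (i%:Z - W%:Z) * (q (j.+1%:Z + (i%:Z - W%:Z))
        * q (j.+1%:Z - (i%:Z - W%:Z))))) = 0.
  rewrite (telescope_sumr_eq (fun i => - h i)) //; last first.
    move=> i _; rewrite /h.
    have -> : i.+1%:Z - W%:Z = (i%:Z - W%:Z) + 1 by lia.
    rewrite sS.
    have -> : j.+1%:Z + (i%:Z - W%:Z + 1) - 1 = j.+1%:Z + (i%:Z - W%:Z) by lia.
    have -> : j.+1%:Z - (i%:Z - W%:Z + 1) = (j.+1%:Z - (i%:Z - W%:Z)) - 1 by lia.
    rewrite !qS.
    ring.
  rewrite /h (qN (j.+1%:Z - ((2 * W).+1%:Z - W%:Z))); last by lia.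
  rewrite (qN (j.+1%:Z + (0%N%:Z - W%:Z) - 1)); last by lia.
  by rewrite !(mulr0, mul0r) oppr0 subrr.
rewrite -mulr_sumr in H.
move/eqP: H; rewrite mulf_eq0 pnatr_eq0 addn_eq0 /= => /eqP ->.
by [].
Qed.

Lemma Dixon (a b c W : nat) : (a <= W)%N ->
  ((a + b)`! * (b + c)`! * (c + a)`!)%:R *
  \sum_(0 <= i < (2 * W).+1) s (i%:Z - W%:Z) * P a b c (i%:Z - W%:Z)
  = (a + b + c)`!%:R * q a%:Z * q b%:Z * q c%:Z.
Proof.
move=> haW.
rewrite mulr_sumr.
under eq_bigr => i _ do rewrite mulrCA Aid mulr_sumr.
rewrite exchange_big_nat.
under eq_bigr => j _.
  under eq_bigr => i _ do rewrite /T -[_ * q (j%:Z + _) * _]mulrA mulrCA.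
  rewrite -mulr_sumr.
  over.
rewrite big_nat_recl // E_sum // addrC big1_seq ?add0r; last first.
  move=> j /andP[_]; rewrite mem_index_iota => /andP[_ hj].
  by rewrite E_sum ?mulr0 //; lia.
by rewrite mulr1 /= addr0 subn0 !addn0.
Qed.

Lemma zb (N : nat) (b : int) :
  (zbinom N b)%:R = N`!%:R * q b * q (N%:Z - b) :> rat.
Proof.
case: b => [j|j]; last by rewrite /= mulr0 mul0r.
rewrite /zbinom.
case: (leqP j N) => h.
  have -> : N%:Z - j%:Z = (N - j)%N%:Z by lia.
  rewrite !qP -(bin_fact h) !natrM.
  move: (fact_neq0 j) (fact_neq0 (N - j)).
  move: (j`!) (N - j)`! => x y hx hy.
  by field; rewrite hx hy.
by rewrite bin_small // (qN (N%:Z - j%:Z)) ?mulr0 //; lia.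
Qed.

Lemma main_term (l m n u v : nat) (k : int) :
  (-1 : rat) ^ k * (zbinom (l + m) (l%:Z + k) * zbinom (m + n) (m%:Z + k)
     * zbinom (n + l) (n%:Z + k) * zbinom (u + v) (u%:Z + k)
     * zbinom (u + v) (v%:Z + k))%:R
  = ((u + v)`!%:R ^+ 2 * s k * (q (u%:Z + k) * q (u%:Z - k) * q (v%:Z + k) * q (v%:Z - k)))
    * (((l + m)`! * (m + n)`! * (n + l)`!)%:R * P l m n k).
Proof.
rewrite !natrM !zb.
have -> : (l + m)%N%:Z - (l%:Z + k) = m%:Z - k by lia.
have -> : (m + n)%N%:Z - (m%:Z + k) = n%:Z - k by lia.
have -> : (n + l)%N%:Z - (n%:Z + k) = l%:Z - k by lia.
have -> : (u + v)%N%:Z - (u%:Z + k) = v%:Z - k by lia.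
have -> : (u + v)%N%:Z - (v%:Z + k) = u%:Z - k by lia.
rewrite /P /s; ring.
Qed.

Lemma Dixon2 (u v j W : nat) : (u <= W)%N ->
  \sum_(0 <= i < (2 * W).+1) s (i%:Z - W%:Z) * P u v j (i%:Z - W%:Z)
  = (u + v + j)`!%:R * q u%:Z * q v%:Z * q j%:Z
    / ((u + v)`! * (v + j)`! * (j + u)`!)%:R.
Proof.
move=> h.
have hF : (((u + v)`! * (v + j)`! * (j + u)`!)%:R : rat) != 0.
  by rewrite pnatr_eq0 -lt0n !muln_gt0 !fact_gt0.
by rewrite -(Dixon u v j W h) [_%:R * _]mulrC mulfK.
Qed.

Lemma rearr (l m n u v j : nat) (k : int) :
  ((u + v)`!%:R ^+ 2 * s k * (q (u%:Z + k) * q (u%:Z - k) * q (v%:Z + k) * q (v%:Z - k)))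
    * T l m n k j
  = ((u + v)`!%:R ^+ 2 * ((l + m + n - j)`!%:R * q (l%:Z - j%:Z) * q (m%:Z - j%:Z)
       * q (n%:Z - j%:Z))) * (s k * P u v j k).
Proof. rewrite /T /P; ring. Qed.

Theorem corollary5p8 (l m n u v : nat) :
  \sum_(0 <= i < (2 * (l + m + n + u + v)).+1)
     ((-1 : rat) ^ (i%:Z - (l + m + n + u + v)%N%:Z) *
      (zbinom (l + m) (l%:Z + (i%:Z - (l + m + n + u + v)%N%:Z)) *
       zbinom (m + n) (m%:Z + (i%:Z - (l + m + n + u + v)%N%:Z)) *
       zbinom (n + l) (n%:Z + (i%:Z - (l + m + n + u + v)%N%:Z)) *
       zbinom (u + v) (u%:Z + (i%:Z - (l + m + n + u + v)%N%:Z)) *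
       zbinom (u + v) (v%:Z + (i%:Z - (l + m + n + u + v)%N%:Z)))%:R)
  = ('C(u + v, u))%:R *
    \sum_(0 <= k < (l + m + n).+1)
       (((l + m + n - k)`! * (u + v + k)`!)%:R
        / ((k`! * (u + k)`! * (v + k)`!)%:R : rat)
        * zinvfact (l%:Z - k%:Z) * zinvfact (m%:Z - k%:Z)
        * zinvfact (n%:Z - k%:Z)).
Proof.
have hu : (u <= l + m + n + u + v)%N by lia.
under eq_bigr => i _ do rewrite main_term Aid mulr_sumr.
rewrite exchange_big_nat.
under eq_bigr => j _.
  under eq_bigr => i _ do rewrite rearr.
  rewrite -mulr_sumr (Dixon2 _ _ _ _ hu).
  over.
rewrite [in RHS](big_cat_nat (n := l.+1) (leq0n _)); last by lia.
rewrite [X in _ * (_ + X)]big1_seq ?addr0; last first.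
  move=> k /andP[_]; rewrite mem_index_iota => /andP[hk _].
  by rewrite (qN (l%:Z - k%:Z)) ?(mulr0, mul0r) //; lia.
rewrite mulr_sumr.
apply: eq_big_nat => j /andP[_ hj].
rewrite -[('C(u + v, u))%:R]/((zbinom (u + v) u%:Z)%:R : rat) zb.
have -> : (u + v)%N%:Z - u%:Z = v%:Z by lia.
rewrite (addnC j u) !natrM !fq.
by field; rewrite !q_neq0.
Qed.
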